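(* The functor $\tau\colon \Delta_{\mathbb{F}}^1\to\Omega$ preserves the surjective-injective and active-inert factorization systems.
   Context: $\Delta_{\mathbb{F}}^1$ is the full subcategory of Barwick's category $\Delta_{\mathbb{F}}$ (objects $([n], f\colon[n]\to\mathbb{F})$, $\mathbb{F}$ finite sets; morphisms $(\phi,\eta)$ with $\phi$ in $\Delta$, $\eta\colon f\to g\circ\phi$ with injective components and pullback naturality squares) on objects with $f(n)=\mathbf{1}$. A map $(\phi,\eta)$ is injective if $\phi$ is injective; surjective if $\phi$ is surjective and all $\eta_i$ are bijections; inert if $\phi$ is the inclusion of a subinterval; active if $\phi$ preserves endpoints and all $\eta_i$ are bijections. $\Omega$ is the dendroidal category (trees as polynomial endofunctors, per Kock), where inert maps are embeddings of subtrees and active maps send leaves bijectively to leaves and root to root. $\tau$ sends $([n],f)$ to the tree with edges $\coprod_{i=0}^n f(i)$ and vertices $\coprod_{i=1}^n f(i)$, the edge $x\in f(i)$ ($i<n$) entering the vertex $f^{i(i+1)}(x)$, and is determined on morphisms by the edge map given on $f(i)$ by $\eta_i\colon f(i)\to g(\phi(i))$. *)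

(* Defs.v *)
From mathcomp Require Import all_boot.
Set Implicit Arguments.
Unset Strict Implicit.
Unset Printing Implicit Defensive.

(* The category Delta_F^1 (Barwick), with the category F of finite sets     *)
(* taken skeletally: the finite set f(i) is {0, ..., dsz i - 1}.            *)
(* An object ([n], f : [n] -> F) is given by n, the sizes of the f(i), and  *)
(* the structure maps f^{i(i+1)} : f(i) -> f(i+1) (i < n); the general      *)

Record dobj := DObj {
  dn : nat;
  dsz : nat -> nat;                     (* |f(i)|, relevant for i <= dn *)
  dmap : nat -> nat -> nat;
  dmap_ok : forall i x, i < dn -> x < dsz i -> dmap i x < dsz i.+1;
  dsz_top : dsz dn = 1
}.

Fixpoint fsteps (X : dobj) (i k x : nat) : nat :=
  match k with
  | 0 => x
  | k'.+1 => dmap X (i + k') (fsteps X i k' x)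
  end.

Definition fij (X : dobj) (i j x : nat) : nat := fsteps X i (j - i) x.

(* A morphism (phi, eta) : ([n], f) -> ([m], g) of Delta_F:                 *)
(* phi : [n] -> [m] in Delta, eta : f -> g o phi natural, with injective    *)
(* components, and all naturality squares pullbacks.                       *)
Record dmor (X Y : dobj) := DMor {
  phi : nat -> nat;
  eta : nat -> nat -> nat;
  phi_range : forall i, i <= dn X -> phi i <= dn Y;
  phi_mono : forall i j, i <= j -> j <= dn X -> phi i <= phi j;
  eta_range : forall i x, i <= dn X -> x < dsz X i -> eta i x < dsz Y (phi i);
  eta_inj : forall i x x', i <= dn X -> x < dsz X i -> x' < dsz X i ->
              eta i x = eta i x' -> x = x';
  eta_nat : forall i j x, i <= j -> j <= dn X -> x < dsz X i ->
              eta j (fij X i j x) = fij Y (phi i) (phi j) (eta i x);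
  (* pullback: the comparison map f(i) -> f(j) x_{g(phi j)} g(phi i) is     *)
  (* injective (by eta_inj) and surjective: *)
  eta_pb : forall i j y z, i <= j -> j <= dn X ->
              y < dsz Y (phi i) -> z < dsz X j ->
              fij Y (phi i) (phi j) y = eta j z ->
              exists2 x, x < dsz X i & eta i x = y /\ fij X i j x = z
}.

Section DClasses.
Variables (X Y : dobj) (m : dmor X Y).

Definition eta_bij : Prop :=
  forall i y, i <= dn X -> y < dsz Y (phi m i) ->
    exists2 x, x < dsz X i & eta m i x = y.

Definition d_injective : Prop :=
  forall i j, i <= dn X -> j <= dn X -> phi m i = phi m j -> i = j.

Definition d_surjective : Prop :=
  (forall k, k <= dn Y -> exists2 i, i <= dn X & phi m i = k) /\ eta_bij.

(* phi is the inclusion of a subinterval *)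
Definition d_inert : Prop :=
  exists k, forall i, i <= dn X -> phi m i = i + k.

Definition d_active : Prop :=
  phi m 0 = 0 /\ phi m (dn X) = dn Y /\ eta_bij.
End DClasses.

(* Trees (Kock): a polynomial endofunctor  A <-s- M -p-> N -t-> A  with s   *)
(* and t injective.  Encoded by the edge set A = tE, the vertex set N = tV, *)
(* t = tout, and M (= s(M), the edges which are inputs of a vertex) with p  *)
(* via tin : tE -> option tV (tin e = Some v iff e is an input of v).       *)

Record tree := Tree {
  tE : Type;
  tV : Type;
  tout : tV -> tE;
  tin : tE -> option tV
}.

Definition is_root (T : tree) (e : tE T) : Prop := tin e = None.
Definition is_leaf (T : tree) (e : tE T) : Prop := forall v, tout v <> e.

Section OmegaClasses.
Variables (T T' : tree) (f : tE T -> tE T').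

Definition om_injective : Prop := injective f.
Definition om_surjective : Prop := forall e', exists e, f e = e'.

Definition om_active : Prop :=
  (forall e, is_root e -> is_root (f e)) /\
  (forall e, is_leaf e -> is_leaf (f e)) /\
  (forall e1 e2, is_leaf e1 -> is_leaf e2 -> f e1 = f e2 -> e1 = e2) /\
  (forall e', is_leaf e' -> exists2 e, is_leaf e & f e = e').

(* embedding of a subtree (Kock's tree embedding): f extends to a map of    *)
(* polynomial endofunctors whose middle square is cartesian.               *)
Definition om_inert : Prop :=
  exists g : tV T -> tV T',
    (forall v, tout (g v) = f (tout v)) /\
    (forall e v, tin e = Some v -> tin (f e) = Some (g v)) /\
    (forall v e', tin e' = Some (g v) ->
        exists2 e, tin e = Some v & f e = e') /\
    (forall v e1 e2, tin e1 = Some v -> tin e2 = Some v -> f e1 = f e2 -> e1 = e2).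
End OmegaClasses.

Definition tauE (X : dobj) : Type := {i : 'I_(dn X).+1 & 'I_(dsz X i)}.
(* vertices: coprod_{i=1}^n f(i); the vertex (i, x) here (i < n) is x in f(i+1) *)
Definition tauV (X : dobj) : Type := {i : 'I_(dn X) & 'I_(dsz X i.+1)}.

Definition tau_out (X : dobj) (v : tauV X) : tauE X :=
  let: existT i x := v in
  existT (fun j : 'I_(dn X).+1 => 'I_(dsz X j)) (@Ordinal (dn X).+1 i.+1 (ltn_ord i)) x.

Definition tau_in (X : dobj) (e : tauE X) : option (tauV X) :=
  let: existT i x := e in
  (if (i < dn X) as b return ((i < dn X) = b -> option (tauV X))
   then fun h => Some (existT (fun j : 'I_(dn X) => 'I_(dsz X j.+1)) (Ordinal h)
                        (Ordinal (dmap_ok h (ltn_ord x))))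
   else fun _ => None) (erefl _).

Definition tau (X : dobj) : tree := Tree (@tau_out X) (@tau_in X).

Definition tau_mor (X Y : dobj) (m : dmor X Y) : tE (tau X) -> tE (tau Y) :=
  fun e => let: existT i x := e in
  existT (fun j : 'I_(dn Y).+1 => 'I_(dsz Y j))
    (@Ordinal (dn Y).+1 (phi m i) (phi_range m (ltn_ord i)))
    (Ordinal (eta_range m (ltn_ord i) (ltn_ord x))).

(* Main.v *)
Require Import Defs.
From mathcomp Require Import all_boot.
Set Implicit Arguments.
Unset Strict Implicit.
Definition lvl X (e : tauE X) : nat := val (projT1 e).
Definition idx X (e : tauE X) : nat := val (projT2 e).
Lemma dep_ifT A (b : bool) (F : b = true -> A) (G : b = false -> A) (h : b = true) :
  (if b as b' return (b = b' -> A) then F else G) (erefl b) = F h.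
Proof. by case: b F G h => F G h //=; rewrite (eq_irrelevance h (erefl true)). Qed.
Lemma dep_ifF A (b : bool) (F : b = true -> A) (G : b = false -> A) (h : b = false) :
  (if b as b' return (b = b' -> A) then F else G) (erefl b) = G h.
Proof. by case: b F G h => F G h //=; rewrite (eq_irrelevance h (erefl false)). Qed.
Lemma tau_in_spec X (e : tauE X) :
  if lvl e < dn X then exists v, tau_in e = Some v /\ val (projT1 v) = lvl e /\ val (projT2 v) = dmap X (lvl e) (idx e)
  else tau_in e = None.
Proof.
case: e => i x; rewrite /tau_in /lvl /idx /=.
case: ifP => h.
  by rewrite (dep_ifT _ _ h); eexists; split.
by rewrite (dep_ifF _ _ h).
Qed.

Definition vlvl X (v : tauV X) : nat := val (projT1 v).
Definition vidx X (v : tauV X) : nat := val (projT2 v).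

Lemma tauE_eq X (e1 e2 : tauE X) : lvl e1 = lvl e2 -> idx e1 = idx e2 -> e1 = e2.
Proof.
case: e1 => [[a ha] [x hx]]; case: e2 => [[b hb] [y hy]]; rewrite /lvl /idx /= => Eab.
subst b; have E : hb = ha := bool_irrelevance _ _; subst hb => Exy; subst y.
by rewrite (bool_irrelevance hy hx).
Qed.

Lemma tauV_eq X (e1 e2 : tauV X) : vlvl e1 = vlvl e2 -> vidx e1 = vidx e2 -> e1 = e2.
Proof.
case: e1 => [[a ha] [x hx]]; case: e2 => [[b hb] [y hy]]; rewrite /vlvl /vidx /= => Eab.
subst b; have E : hb = ha := bool_irrelevance _ _; subst hb => Exy; subst y.
by rewrite (bool_irrelevance hy hx).
Qed.

Lemma lvl_le X (e : tauE X) : lvl e <= dn X.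
Proof. by have := ltn_ord (projT1 e). Qed.
Lemma idx_lt X (e : tauE X) : idx e < dsz X (lvl e).
Proof. exact: ltn_ord (projT2 e). Qed.
Lemma vlvl_lt X (v : tauV X) : vlvl v < dn X.
Proof. exact: ltn_ord (projT1 v). Qed.
Lemma vidx_lt X (v : tauV X) : vidx v < dsz X (vlvl v).+1.
Proof. exact: ltn_ord (projT2 v). Qed.

Lemma lvl_out X (v : tauV X) : lvl (tau_out v) = (vlvl v).+1.
Proof. by case: v. Qed.
Lemma idx_out X (v : tauV X) : idx (tau_out v) = vidx v.
Proof. by case: v. Qed.
Lemma lvl_mor X Y (m : dmor X Y) e : lvl (tau_mor m e) = phi m (lvl e).
Proof. by case: e. Qed.
Lemma idx_mor X Y (m : dmor X Y) e : idx (tau_mor m e) = eta m (lvl e) (idx e).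
Proof. by case: e. Qed.

Lemma leafE X (e : tauE X) : is_leaf (T := tau X) e <-> lvl e = 0.
Proof.
split.
  case: e => [[[|j] hj] x] L //.
  exfalso; apply: (L (existT (fun j : 'I_(dn X) => 'I_(dsz X j.+1)) (Ordinal (hj : j < dn X)) x)).
  by apply: tauE_eq.
move=> h v E; have := f_equal (@lvl X) E.
by rewrite /= lvl_out h.
Qed.

Lemma rootE X (e : tauE X) : is_root (T := tau X) e <-> ~~ (lvl e < dn X).
Proof.
rewrite /is_root /=; have := tau_in_spec e.
case: ifP => h.
  by move=> [v [-> _]].
by move=> ->.
Qed.

Lemma fij1 X i x : fij X i i.+1 x = dmap X i x.
Proof. by rewrite /fij subSnn /= addn0. Qed.

Theorem lemma4p4 (X Y : dobj) (m : dmor X Y) :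
  (d_surjective m -> om_surjective (tau_mor m)) /\
  (d_injective m -> om_injective (tau_mor m)) /\
  (d_active m -> om_active (tau_mor m)) /\
  (d_inert m -> om_inert (tau_mor m)).
Proof.
split.
  move=> [Hs Hb] e'.
  have [i hi phik] := Hs _ (lvl_le e').
  have hy : idx e' < dsz Y (phi m i) by rewrite phik; exact: idx_lt.
  have [x hx ex] := Hb i _ hi hy.
  exists (existT (fun j : 'I_(dn X).+1 => 'I_(dsz X j)) (Ordinal (hi : i < (dn X).+1)) (Ordinal hx)).
  by apply: tauE_eq; rewrite ?lvl_mor ?idx_mor /=.
split.
  move=> Hi e1 e2 E.
  have L := f_equal (@lvl Y) E; have I := f_equal (@idx Y) E.
  rewrite !lvl_mor in L; rewrite !idx_mor in I.
  have El : lvl e1 = lvl e2 := Hi _ _ (lvl_le e1) (lvl_le e2) L.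
  apply: tauE_eq; first by rewrite El.
  have i1 := idx_lt e1; rewrite El in I i1.
  exact: (eta_inj (lvl_le e2) i1 (idx_lt e2) I).
split.
  move=> [H0 [Hn Hb]]; split.
    move=> e /rootE h; apply/rootE; rewrite lvl_mor.
    have E : lvl e = dn X by apply/eqP; rewrite eqn_leq lvl_le leqNgt h.
    by rewrite E Hn ltnn.
  split.
    by move=> e /leafE h; apply/leafE; rewrite lvl_mor h H0.
  split.
    move=> e1 e2 /leafE h1 /leafE h2 E.
    have I := f_equal (@idx Y) E; rewrite !idx_mor h1 h2 in I.
    apply: tauE_eq; first by rewrite h1 h2.
    have i1 := idx_lt e1; have i2 := idx_lt e2; rewrite h1 in i1; rewrite h2 in i2.
    exact: (eta_inj (leq0n _) i1 i2 I).
  move=> e' /leafE h.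
  have hy : idx e' < dsz Y (phi m 0) by rewrite H0 -h; exact: idx_lt.
  have [x hx ex] := Hb 0 _ (leq0n _) hy.
  exists (existT (fun j : 'I_(dn X).+1 => 'I_(dsz X j)) (Ordinal (ltn0Sn (dn X))) (Ordinal hx)).
    by apply/leafE.
  by apply: tauE_eq; rewrite ?lvl_mor ?idx_mor /= ?H0.
move=> [k Hk].
have Hn : dn X + k <= dn Y by rewrite -Hk //; exact: phi_range.
have H1 : forall i : 'I_(dn X), i + k < dn Y.
  by move=> i; apply: leq_trans Hn; rewrite ltn_add2r.
have H2 : forall (i : 'I_(dn X)) (x : 'I_(dsz X i.+1)), eta m i.+1 x < dsz Y (i + k).+1.
  move=> i x; have := eta_range m (ltn_ord i) (ltn_ord x).
  by rewrite Hk ?addSn //; exact: ltn_ord.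
pose g := fun v : tauV X => let: existT i x := v in
  existT (fun j : 'I_(dn Y) => 'I_(dsz Y j.+1)) (Ordinal (H1 i)) (Ordinal (H2 i x)).
have gl : forall v, vlvl (g v) = vlvl v + k by case.
have gi : forall v, vidx (g v) = eta m (vlvl v).+1 (vidx v) by case.
exists g; split.
  move=> v; apply: tauE_eq.
    by rewrite /= lvl_out lvl_mor lvl_out gl Hk ?addSn //; exact: vlvl_lt.
  by rewrite /= idx_out idx_mor lvl_out idx_out gi.
split.
  move=> e v /=; have := tau_in_spec e.
  case: ifP => h; last by move=> ->.
  move=> [w [-> [Lw Iw]]] [<-].
  have := tau_in_spec (tau_mor m e).
  rewrite lvl_mor Hk ?ltn_add2r ?h; last exact: lvl_le.
  have -> : lvl e + k < dn Y by apply: leq_trans Hn; rewrite ltn_add2r.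
  move=> [u [-> [Lu Iu]]]; congr Some; apply: tauV_eq.
    by move: (gl w); rewrite /vlvl => ->; rewrite Lu Lw.
  move: (gi w); rewrite /vidx => ->.
  rewrite Iu Iw idx_mor /vlvl Lw.
  have := eta_nat m (leqnSn (lvl e)) h (idx_lt e).
  by rewrite !fij1 !Hk ?addSn ?fij1 //; exact: ltnW.
split.
  move=> v e' /=; have := tau_in_spec e'.
  case: ifP => h; last by move=> ->.
  move=> [w [-> [Lw Iw]]] [Ew]; subst w.
  move: Lw Iw; move: (gl v) (gi v); rewrite /vlvl /vidx => -> -> Lw Iw; rewrite -/(vlvl v) -/(vidx v) in Lw Iw.
  have hy : idx e' < dsz Y (phi m (vlvl v)).
    by rewrite Hk ?Lw; [exact: idx_lt | exact: ltnW (vlvl_lt v)].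
  have hf : fij Y (phi m (vlvl v)) (phi m (vlvl v).+1) (idx e') = eta m (vlvl v).+1 (vidx v).
    by rewrite !Hk ?addSn ?fij1 ?Lw ?Iw //; [exact: vlvl_lt | exact: ltnW (vlvl_lt v)].
  have [x hx [ex fx]] := eta_pb (leqnSn _) (vlvl_lt v) hy (vidx_lt v) hf.
  rewrite fij1 in fx.
  pose e0 := existT (fun j : 'I_(dn X).+1 => 'I_(dsz X j)) (Ordinal (ltnW (vlvl_lt v) : vlvl v < (dn X).+1)) (Ordinal hx).
  have L0 : lvl e0 < dn X by exact: (vlvl_lt v).
  exists e0.
    have := tau_in_spec e0; rewrite L0 => -[u [-> [Lu Iu]]]; congr Some.
    apply: tauV_eq; [exact: Lu | rewrite /vidx Iu; exact: fx].
  by apply: tauE_eq; rewrite ?lvl_mor ?idx_mor /= ?Hk ?Lw //; exact: ltnW (vlvl_lt v).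
move=> v e1 e2 /= h1 h2 E.
have S1 := tau_in_spec e1; have S2 := tau_in_spec e2.
have l1 : lvl e1 = vlvl v.
  move: S1 h1; case: ifP => _; last by move=> ->.
  by move=> [u [-> [Lu _]]] [<-].
have l2 : lvl e2 = vlvl v.
  move: S2 h2; case: ifP => _; last by move=> ->.
  by move=> [u [-> [Lu _]]] [<-].
have I := f_equal (@idx Y) E; rewrite !idx_mor l1 l2 in I.
apply: tauE_eq; first by rewrite l1 l2.
have i1 := idx_lt e1; have i2 := idx_lt e2; rewrite l1 in i1; rewrite l2 in i2.
exact: (eta_inj (ltnW (vlvl_lt v)) i1 i2 I).
Qed.
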